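(* On $S_{1,2}=S_1\cap S_2$ the coefficients $(a_0,a_1,h_1,h_2)$ are free parameters, with $a_2=2h_2+h_{1,x}+a_0h_1$ and $h_3=-h_{1,xx}-2h_{2,x}+h_1^2-a_1h_1-a_0(h_{1,x}+h_2)$, and the restriction of the DKP flow $t_2$ to $S_{1,2}$ is $\partial_{t_2}a_0=\partial_x(2a_1-a_0^2+a_{0,x})$, $\partial_{t_2}a_1=2a_{2,x}+a_{1,xx}+2a_{0,x}(h_1-a_1)$, $\partial_{t_2}h_1=\partial_x(2h_2+h_{1,x})$, $\partial_{t_2}h_2=-\partial_x\big(2h_{1,xx}+3h_{2,x}-3h_1^2+2a_0(h_{1,x}+h_2)+2a_1h_1\big)$. Moreover, on $S_{1,2}$, $z\big(h^{(2)}+a_0h^{(1)}+(a_1-2h_1)\big)=h^{(3)}+a_0h^{(2)}+(a_1-3h_1)h^{(1)}+(a_2-2a_0h_1-3h_2-3h_{1,x})$.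
   Context: Let $x$ be a space variable; coefficients are functions of $x$, subscript $x$ denotes $\partial_x$. $M$ is the affine space of formal Laurent series $h(z)=z+\sum_{j\ge1}h_jz^{-j}$, $A$ that of $a(z)=z+\sum_{j\ge0}a_jz^{-j}$, $N=M\times A$. Faà di Bruno iterates: $h^{(0)}=1$, $h^{(j+1)}=\partial_xh^{(j)}+h\,h^{(j)}$. For $j\ge0$ the KP current $H^{(j)}$ is the unique series $h^{(j)}+\sum_{l=0}^{j-2}p^j_l[h]h^{(l)}$ ($p^j_l$ differential polynomials in the $h_i$) with $H^{(j)}=z^j+O(z^{-1})$; e.g. $H^{(1)}=h$, $H^{(2)}=h^{(2)}-2h_1$, $H^{(3)}=h^{(3)}-3h_1h^{(1)}-3(h_2+h_{1,x})$. The DKP equations on $N$ are $\partial_{t_j}h=\partial_xH^{(j)}$, $\partial_{t_j}a=a(\tilde H^{(j)}-H^{(j)})$, with $\tilde H^{(j)}$ the current evaluated at $\tilde h=h+a_x/a$. For $l\ge-1$, $S_l\subset N$ is defined by $z^la=H^{(l+1)}+\sum_{m=0}^{l}a_mH^{(l-m)}$; thus $S_1:\ za=H^{(2)}+a_0H^{(1)}+a_1$ and $S_2:\ z^2a=H^{(3)}+a_0H^{(2)}+a_1H^{(1)}+a_2$. *)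

(* Defs.v *)
(* Formal Laurent series in z^{-1} over a commutative
   differential ring (R, d), d playing the role of \partial_x. *)
From HB Require Import structures.
From mathcomp Require Import all_boot all_order all_algebra.
Set Implicit Arguments. Unset Strict Implicit. Unset Printing Implicit Defensive.
Import Order.TTheory GRing.Theory Num.Theory.
Local Open Scope ring_scope.

Definition is_derivation (R : comNzRingType) (d : R -> R) : Prop :=
  (forall x y, d (x + y) = d x + d y) /\ (forall x y, d (x * y) = d x * y + x * d y).

Section Laurent.
Variable R : comNzRingType.
Variable d : R -> R.

(* A series  sum_{k>=0} lco k * z^(ldeg - k)  *)
Record lser := LSer { ldeg : int; lco : nat -> R }.

Definition lcoef (s : lser) (n : int) : R :=
  if n <= ldeg s then lco s `|ldeg s - n|%N else 0.

Definition lseq (s t : lser) : Prop := forall n : int, lcoef s n = lcoef t n.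

Definition ladd (s t : lser) : lser :=
  let D := Num.max (ldeg s) (ldeg t) in
  LSer D (fun k => lcoef s (D - k%:Z) + lcoef t (D - k%:Z)).
Definition lopp (s : lser) : lser := LSer (ldeg s) (fun k => - lco s k).
Definition lsub (s t : lser) : lser := ladd s (lopp t).
Definition lmul (s t : lser) : lser :=
  LSer (ldeg s + ldeg t) (fun k => \sum_(i < k.+1) lco s i * lco t (k - i)).
Definition lC (r : R) : lser := LSer 0 (fun k => if k == 0%N then r else 0).
Definition lz : lser := LSer 1 (fun k => if k == 0%N then 1 else 0).
Definition ldx (s : lser) : lser := LSer (ldeg s) (fun k => d (lco s k)).

(* inverse of a series whose leading coefficient lco s 0 is 1:
   b_0 = 1, b_k = - sum_{i<k} u_{k-i} b_i *)
Fixpoint invl (u : nat -> R) (k : nat) : seq R :=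
  match k with
  | 0 => [:: 1]
  | k'.+1 => let p := invl u k' in
             rcons p (- \sum_(i < k'.+1) u (k'.+1 - i)%N * nth 0 p i)
  end.
Definition linv (s : lser) : lser :=
  LSer (- ldeg s) (fun k => nth 0 (invl (lco s) k) k).

(* points of M: h(z) = z + sum_{j>=1} h_j z^{-j}, with h_j = h j (h 0 unused) *)
Definition hS (h : nat -> R) : lser :=
  LSer 1 (fun k => match k with 0 => 1 | 1 => 0 | k'.+1 => h k' end).
(* points of A: a(z) = z + sum_{j>=0} a_j z^{-j}, with a_j = a j *)
Definition aS (a : nat -> R) : lser :=
  LSer 1 (fun k => match k with 0 => 1 | k'.+1 => a k' end).

Fixpoint fdb (s : lser) (j : nat) : lser :=
  match j with
  | 0 => lC 1
  | j'.+1 => ladd (ldx (fdb s j')) (lmul s (fdb s j'))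
  end.

(* KP currents H^(0..3), as given in the context; the coefficient
   s_i of z^{-i} is lcoef s (- i) *)
Definition cf (s : lser) (i : nat) : R := lcoef s (- i%:Z).
Definition H0 (s : lser) : lser := lC 1.
Definition H1 (s : lser) : lser := s.
Definition H2 (s : lser) : lser := lsub (fdb s 2) (lC (2%:R * cf s 1)).
Definition H3 (s : lser) : lser :=
  lsub (lsub (fdb s 3) (lmul (lC (3%:R * cf s 1)) (fdb s 1)))
       (lC (3%:R * (cf s 2 + d (cf s 1)))).

Definition htilde (hs as_ : lser) : lser := ladd hs (lmul (ldx as_) (linv as_)).

Definition S1 (h a : nat -> R) : Prop :=
  lseq (lmul lz (aS a))
       (ladd (ladd (H2 (hS h)) (lmul (lC (a 0%N)) (H1 (hS h)))) (lmul (lC (a 1%N)) (H0 (hS h)))).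
Definition S2 (h a : nat -> R) : Prop :=
  lseq (lmul (lmul lz lz) (aS a))
       (ladd (ladd (ladd (H3 (hS h)) (lmul (lC (a 0%N)) (H2 (hS h))))
                   (lmul (lC (a 1%N)) (H1 (hS h))))
             (lmul (lC (a 2%N)) (H0 (hS h)))).
Definition S12 (h a : nat -> R) : Prop := S1 h a /\ S2 h a.

Definition dkp2_h (h a : nat -> R) : lser := ldx (H2 (hS h)).
Definition dkp2_a (h a : nat -> R) : lser :=
  lmul (aS a) (lsub (H2 (htilde (hS h) (aS a))) (H2 (hS h))).
(* component equations: d_{t_2} h_j = dkp2_hc h a j (j >= 1),
                        d_{t_2} a_j = dkp2_ac h a j (j >= 0) *)
Definition dkp2_hc (h a : nat -> R) (j : nat) : R := cf (dkp2_h h a) j.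
Definition dkp2_ac (h a : nat -> R) (j : nat) : R := cf (dkp2_a h a) j.

End Laurent.

(* Main.v *)
Require Import Defs.
From HB Require Import structures.
From mathcomp Require Import all_boot all_order all_algebra.
From mathcomp Require Import zify ring.
Import Order.TTheory GRing.Theory Num.Theory.
Local Open Scope ring_scope.

Module Aux.
Set Implicit Arguments. Unset Strict Implicit. Unset Printing Implicit Defensive.

Section Work.
Variable R : comNzRingType.
Variable d : R -> R.
Hypothesis hd : is_derivation d.

Lemma dD x y : d (x + y) = d x + d y. Proof. by case: hd. Qed.
Lemma dM x y : d (x * y) = d x * y + x * d y. Proof. by case: hd. Qed.
Lemma d0 : d 0 = 0.
Proof. apply: (addrI (d 0)); by rewrite -dD !addr0. Qed.
Lemma dN x : d (- x) = - d x.
Proof. apply: (addrI (d x)); by rewrite -dD !subrr d0. Qed.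
Lemma dB x y : d (x - y) = d x - d y.
Proof. by rewrite dD dN. Qed.
Lemma d1 : d 1 = 0.
Proof. have h := dM 1 1. rewrite !mulr1 mul1r in h. by apply: (addrI (d 1)); rewrite addr0 -h. Qed.
Lemma dn n : d n%:R = 0.
Proof. elim: n => [|n IH]; first by rewrite d0. by rewrite mulrS dD d1 IH addr0. Qed.

Lemma lcoef_gt (s : lser R) n : ldeg s < n -> lcoef s n = 0.
Proof. by move=> h; rewrite /lcoef leNgt h. Qed.

Lemma lcoef_deg (s : lser R) (k : nat) : lcoef s (ldeg s - k%:Z) = lco s k.
Proof.
rewrite /lcoef ifT; last by lia.
congr lco; lia.
Qed.

Lemma lcoef_add (s t : lser R) n : lcoef (ladd s t) n = lcoef s n + lcoef t n.
Proof.
rewrite {1}/lcoef /=; case: ifP => hn.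
  by congr (lcoef _ _ + lcoef _ _); lia.
by rewrite !lcoef_gt ?addr0 //; lia.
Qed.

Lemma lcoef_opp (s : lser R) n : lcoef (lopp s) n = - lcoef s n.
Proof. by rewrite /lcoef /=; case: ifP; rewrite ?oppr0. Qed.

Lemma lcoef_sub (s t : lser R) n : lcoef (lsub s t) n = lcoef s n - lcoef t n.
Proof. by rewrite /lsub lcoef_add lcoef_opp. Qed.

Lemma lcoef_C (r : R) n : lcoef (lC r) n = if n == 0 then r else 0.
Proof.
rewrite /lcoef /=; case: ifP => hn.
  have -> : (`|0 - n|%N == 0%N) = (n == 0) by apply/idP/idP => /eqP h; apply/eqP; lia.
  by [].
by case: eqP => // h; move: hn; rewrite h.
Qed.

Lemma lcoef_dx (s : lser R) n : lcoef (ldx d s) n = d (lcoef s n).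
Proof. by rewrite /lcoef /=; case: ifP; rewrite ?d0. Qed.

Lemma lcoef_mul (s t : lser R) n : lcoef (lmul s t) n =
  if n <= ldeg s + ldeg t then
    \sum_(i < (absz (ldeg s + ldeg t - n)%R).+1) lcoef s (ldeg s - i%:Z) * lcoef t (n - ldeg s + i%:Z)
  else 0.
Proof.
rewrite {1}/lcoef /=; case: ifP => // hn.
apply: eq_bigr => i _; rewrite lcoef_deg; congr (_ * _).
have hi := ltn_ord i.
rewrite -lcoef_deg; congr lcoef; move: (nat_of_ord i) hi => m hm; lia.
Qed.

Lemma lcoef_mulC (s t : lser R) n : lcoef (lmul s t) n = lcoef (lmul t s) n.
Proof.
rewrite /lcoef /= (addrC (ldeg s)); case: ifP => // _.
rewrite (reindex_inj rev_ord_inj) /=; apply: eq_bigr => i _.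
have hi := ltn_ord i.
by rewrite subSS subKn 1?mulrC // -ltnS.
Qed.

Lemma lcoef_mulm (s t : lser R) n : (forall k, (0 < k)%N -> lco s k = 0) ->
  lcoef (lmul s t) n = lco s 0 * lcoef t (n - ldeg s).
Proof.
move=> hs; rewrite lcoef_mul; case: ifP => hn.
  rewrite big_ord_recl big1 ?addr0.
    by have h0 := lcoef_deg s 0; rewrite subr0 in h0; rewrite h0.
  by move=> i _; rewrite (lcoef_deg s (lift ord0 i)) hs ?mul0r.
by rewrite (@lcoef_gt t) ?mulr0 //; lia.
Qed.

Lemma lcoef_mulm_r (s t : lser R) n : (forall k, (0 < k)%N -> lco t k = 0) ->
  lcoef (lmul s t) n = lco t 0 * lcoef s (n - ldeg t).
Proof. by move=> h; rewrite lcoef_mulC lcoef_mulm. Qed.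



Definition hh (h : nat -> R) j := if j is 0 then 0 else h j.

Lemma lcoef_hS_neg (h : nat -> R) n k : n = - k%:Z -> lcoef (hS h) n = hh h k.
Proof.
move=> ->; rewrite /lcoef /= ifT; last by lia.
have -> : absz (1 - - k%:Z)%R = k.+1 by lia.
by case: k.
Qed.

Lemma lcoef_hS_1 (h : nat -> R) : lcoef (hS h) 1 = 1.
Proof. by []. Qed.

Lemma lcoef_aS_neg (a : nat -> R) n k : n = - k%:Z -> lcoef (aS a) n = a k.
Proof.
move=> ->; rewrite /lcoef /= ifT; last by lia.
have -> : absz (1 - - k%:Z)%R = k.+1 by lia.
by [].
Qed.

Lemma lcoef_aS_1 (a : nat -> R) : lcoef (aS a) 1 = 1.
Proof. by []. Qed.

Lemma ldeg_fdb (s : lser R) j : ldeg s = 1 -> ldeg (fdb d s j) = j%:Z.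
Proof.
move=> hs; elim: j => [//|j IH] /=.
rewrite IH hs; lia.
Qed.

Lemma lcoef_mul1 (s t : lser R) (e k : nat) n : ldeg s = 1 -> ldeg t = e%:Z -> n = - k%:Z ->
  lcoef (lmul s t) n = lcoef s 1 * lcoef t (- (k.+1)%:Z)
    + \sum_(j < k.+1) lcoef s (- j%:Z) * lcoef t (- (k - j)%N%:Z)
    + \sum_(j < e) lcoef s (- (k.+1 + j)%N%:Z) * lcoef t (j.+1)%:Z.
Proof.
move=> hs ht ->; rewrite lcoef_mul hs ht ifT; last by lia.
have -> : absz (1 + e%:Z - - k%:Z)%R = (k.+1 + e)%N by lia.
rewrite big_ord_recl big_split_ord /= addrA.
congr (_ + _ + _).
- congr (lcoef _ _ * lcoef _ _); lia.
- apply: eq_bigr => i _; have hi := ltn_ord i.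
  rewrite /bump leq0n add1n; congr (lcoef _ _ * lcoef _ _); move: (nat_of_ord i) hi => m hm; lia.
- apply: eq_bigr => i _; have hi := ltn_ord i.
  rewrite /bump leq0n add1n; congr (lcoef _ _ * lcoef _ _); move: (nat_of_ord i) hi => m hm; lia.
Qed.


Lemma lcoef_lC_mul (r : R) t n : lcoef (lmul (lC r) t) n = r * lcoef t n.
Proof. by rewrite lcoef_mulm ?subr0 // => -[]. Qed.

Lemma lcoef_lz_mul (t : lser R) n : lcoef (lmul (lz R) t) n = lcoef t (n - 1).
Proof. by rewrite lcoef_mulm ?mul1r // => -[]. Qed.

Lemma lcoef_lzz_mul (t : lser R) n : lcoef (lmul (lmul (lz R) (lz R)) t) n = lcoef t (n - 2%:Z).
Proof.
rewrite lcoef_mulm /=; first by rewrite big_ord1 /= !mul1r.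
move=> [|k] // _; rewrite big_ord_recl big1 /=; first by rewrite mulr0 addr0.
by move=> i _; rewrite mul0r.
Qed.

Lemma lcoef_f1 (s : lser R) n : lcoef (fdb d s 1) n = lcoef s n.
Proof.
rewrite /= lcoef_add lcoef_dx lcoef_C lcoef_mulm_r /=; last by move=> -[].
by case: eqP => _; rewrite ?d1 ?d0 add0r mul1r subr0.
Qed.

Lemma lcoef_mul_congr (s t t' : lser R) n : ldeg t = ldeg t' ->
  (forall m, lcoef t m = lcoef t' m) -> lcoef (lmul s t) n = lcoef (lmul s t') n.
Proof.
move=> hdeg hc; rewrite !lcoef_mul hdeg; case: ifP => // _.
by apply: eq_bigr => i _; rewrite hc.
Qed.

Lemma fdbS (s : lser R) j : fdb d s j.+1 = ladd (ldx d (fdb d s j)) (lmul s (fdb d s j)).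
Proof. by []. Qed.

Lemma lcoef_f2 (s : lser R) n : ldeg s = 1 ->
  lcoef (fdb d s 2) n = d (lcoef s n) + lcoef (lmul s s) n.
Proof.
move=> hs; rewrite fdbS lcoef_add lcoef_dx lcoef_f1.
by congr (_ + _); apply: lcoef_mul_congr => [|m]; rewrite ?lcoef_f1 // ldeg_fdb.
Qed.

Lemma lcoef_f3 (s : lser R) n :
  lcoef (fdb d s 3) n = d (lcoef (fdb d s 2) n) + lcoef (lmul s (fdb d s 2)) n.
Proof. by rewrite fdbS lcoef_add lcoef_dx. Qed.

Lemma lcoef_H2 (s : lser R) n :
  lcoef (H2 d s) n = lcoef (fdb d s 2) n - (if n == 0 then 2%:R * cf s 1 else 0).
Proof. by rewrite /H2 lcoef_sub lcoef_C. Qed.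

Lemma lcoef_H3 (s : lser R) n :
  lcoef (H3 d s) n = lcoef (fdb d s 3) n - 3%:R * cf s 1 * lcoef s n
     - (if n == 0 then 3%:R * (cf s 2 + d (cf s 1)) else 0).
Proof. by rewrite /H3 !lcoef_sub lcoef_lC_mul lcoef_f1 lcoef_C. Qed.

Definition conv (h : nat -> R) k := \sum_(j < k.+1) hh h j * hh h (k - j).
Definition c2 (h : nat -> R) k := d (hh h k) + 2%:R * hh h k.+1 + conv h k.
Definition R2 (h : nat -> R) k := \sum_(j < k.+1) hh h j * c2 h (k - j).

Lemma lcoef_hS_negk (h : nat -> R) k : lcoef (hS h) (- k%:Z) = hh h k.
Proof. exact: lcoef_hS_neg. Qed.
Lemma lcoef_aS_negk (a : nat -> R) k : lcoef (aS a) (- k%:Z) = a k.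
Proof. exact: lcoef_aS_neg. Qed.

Lemma f2_neg (h : nat -> R) n k : n = - k%:Z -> lcoef (fdb d (hS h) 2) n = c2 h k.
Proof.
move=> hn; rewrite lcoef_f2 // (@lcoef_mul1 _ _ 1 k n) //.
rewrite hn big_ord1 addn0 !lcoef_hS_negk lcoef_hS_1.
rewrite /c2 /conv mul1r mulr1 mulr2n mulrDl mul1r -!addrA; congr (_ + (_ + _)).
rewrite addrC; congr (_ + _).
by apply: eq_bigr => i _; rewrite !lcoef_hS_negk.
Qed.


Lemma f2_negk (h : nat -> R) k : lcoef (fdb d (hS h) 2) (- k%:Z) = c2 h k.
Proof. exact: f2_neg. Qed.

Lemma f2_1 (h : nat -> R) : lcoef (fdb d (hS h) 2) 1 = 0.
Proof.
rewrite lcoef_f2 // lcoef_mul /= !big_ord_recl big_ord0 /lcoef /=.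
by rewrite d1 !(mul0r, mulr0, addr0).
Qed.

Lemma f2_2 (h : nat -> R) : lcoef (fdb d (hS h) 2) 2%:Z = 1.
Proof.
rewrite lcoef_f2 // lcoef_mul /= !big_ord_recl big_ord0 /lcoef /=.
by rewrite d0 !(mul0r, mulr0, addr0, add0r, mulr1).
Qed.

Lemma f3_neg (h : nat -> R) n k : n = - k%:Z ->
  lcoef (fdb d (hS h) 3) n = d (c2 h k) + c2 h k.+1 + R2 h k + hh h k.+2.
Proof.
move=> hn; rewrite lcoef_f3 (f2_neg _ hn) (@lcoef_mul1 _ _ 2 k n) //.
have -> : \sum_(j < 2) lcoef (hS h) (- (k.+1 + j)%N%:Z) * lcoef (fdb d (hS h) 2) (j.+1)%:Z
   = hh h k.+2.
  rewrite (big_ord_recl 1) big_ord1 f2_1 f2_2 mulr0 add0r mulr1.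
  by rewrite lcoef_hS_negk /= addn1.
rewrite lcoef_hS_1 f2_negk mul1r !addrA.
congr (_ + _ + _ + _); rewrite /R2.
by apply: eq_bigr => i _; rewrite lcoef_hS_negk f2_negk.
Qed.


Lemma f2_eval (h : nat -> R) n : lcoef (fdb d (hS h) 2) n =
  if n <= 0 then c2 h (absz n) else if n == 1 then 0 else if n == 2%:Z then 1 else 0.
Proof.
case: (lerP n 0) => hn.
  by apply: f2_neg; lia.
have [->|[->|hn2]] : n = 1 \/ n = 2%:Z \/ 2%:Z < n by lia.
- by rewrite f2_1.
- by rewrite f2_2.
rewrite lcoef_gt; last by rewrite ldeg_fdb.
rewrite ifF; last by apply/eqP; lia.
by rewrite ifF //; apply/eqP; lia.
Qed.

Lemma f3_eval_pos (h : nat -> R) n : 0 < n -> lcoef (fdb d (hS h) 3) n =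
  if n == 1 then c2 h 0 + hh h 1 else if n == 3%:Z then 1 else 0.
Proof.
move=> hn; have [->|[->|[->|hn2]]] : n = 1 \/ n = 2%:Z \/ n = 3%:Z \/ 3%:Z < n by lia.
- rewrite lcoef_f3 lcoef_mul ldeg_fdb //.
  under eq_bigr => i _ do rewrite f2_eval.
  rewrite f2_eval /= !big_ord_recl big_ord0 /lcoef /=.
  by rewrite d0 !(mul0r, mulr0, addr0, add0r, mulr1, mul1r).
- rewrite lcoef_f3 lcoef_mul ldeg_fdb //.
  under eq_bigr => i _ do rewrite f2_eval.
  rewrite f2_eval /= !big_ord_recl big_ord0 /lcoef /=.
  by rewrite d1 !(mul0r, mulr0, addr0, add0r, mulr1, mul1r).
- rewrite lcoef_f3 lcoef_mul ldeg_fdb //.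
  under eq_bigr => i _ do rewrite f2_eval.
  rewrite f2_eval /= !big_ord_recl big_ord0 /lcoef /=.
  by rewrite d0 !(mul0r, mulr0, addr0, add0r, mulr1, mul1r).
rewrite lcoef_gt; last by rewrite ldeg_fdb.
rewrite ifF; last by apply/eqP; lia.
by rewrite ifF //; apply/eqP; lia.
Qed.


Lemma S1E (h a : nat -> R) : S1 d h a <-> forall n, lcoef (aS a) (n - 1) =
  lcoef (fdb d (hS h) 2) n - (if n == 0 then 2%:R * hh h 1 else 0)
  + a 0%N * lcoef (hS h) n + a 1%N * (if n == 0 then 1 else 0).
Proof.
rewrite /S1 /lseq; split => H n; move: (H n);
  by rewrite lcoef_lz_mul 2!lcoef_add !lcoef_lC_mul lcoef_H2 /H1 /H0 lcoef_C /cf lcoef_hS_negk.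
Qed.

Lemma S2E (h a : nat -> R) : S2 d h a <-> forall n, lcoef (aS a) (n - 2%:Z) =
  lcoef (fdb d (hS h) 3) n - 3%:R * hh h 1 * lcoef (hS h) n
  - (if n == 0 then 3%:R * (hh h 2 + d (hh h 1)) else 0)
  + a 0%N * (lcoef (fdb d (hS h) 2) n - (if n == 0 then 2%:R * hh h 1 else 0))
  + a 1%N * lcoef (hS h) n + a 2%N * (if n == 0 then 1 else 0).
Proof.
rewrite /S2 /lseq; split => H n; move: (H n);
  by rewrite lcoef_lzz_mul 3!lcoef_add !lcoef_lC_mul lcoef_H3 lcoef_H2 /H1 /H0 lcoef_C /cf !lcoef_hS_negk.
Qed.

Definition E1 (h : nat -> R) (a0 a1 : R) k :=
  c2 h k - (if k == 0%N then 2%:R * hh h 1 else 0) + a0 * hh h k + (if k == 0%N then a1 else 0).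

Definition E2 (h : nat -> R) (a0 a1 a2 : R) k :=
  d (c2 h k) + c2 h k.+1 + R2 h k + hh h k.+2 - 3%:R * hh h 1 * hh h k
  - (if k == 0%N then 3%:R * (hh h 2 + d (hh h 1)) else 0)
  + a0 * (c2 h k - (if k == 0%N then 2%:R * hh h 1 else 0))
  + a1 * hh h k + (if k == 0%N then a2 else 0).

Lemma negz_eq0 (k : nat) : (- k%:Z == 0) = (k == 0%N).
Proof. by case: k. Qed.

Lemma S1_iff (h a : nat -> R) : S1 d h a <-> forall k, a k.+1 = E1 h (a 0%N) (a 1%N) k.
Proof.
rewrite S1E; split => H.
  move=> k; move: (H (- k%:Z)); rewrite f2_negk lcoef_hS_negk negz_eq0.
  rewrite (@lcoef_aS_neg _ _ k.+1); last by lia.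
  by move=> ->; rewrite /E1; case: (k == 0%N); rewrite ?mulr1 ?mulr0 ?addr0.
move=> n; case: (lerP n 0) => hn.
  have hk : n = - (absz n)%:Z by lia.
  rewrite hk f2_negk lcoef_hS_negk negz_eq0.
  rewrite (@lcoef_aS_neg _ _ (absz n).+1); last by lia.
  by rewrite H /E1; case: (_ == 0%N); rewrite ?mulr1 ?mulr0 ?addr0.
have [->|[->|hn2]] : n = 1 \/ n = 2%:Z \/ 2%:Z < n by lia.
- rewrite f2_1 lcoef_hS_1 /= /lcoef /=.
  by rewrite !(mul0r, mulr0, addr0, add0r, mulr1, mul1r, subr0, oppr0, addn0).
- rewrite f2_eval /= /lcoef /=.
  by rewrite !(mul0r, mulr0, addr0, add0r, mulr1, mul1r, subr0).
rewrite !lcoef_gt //; try by rewrite ?ldeg_fdb //=; lia.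
rewrite (_ : (n == 0) = false); last by apply/eqP; lia.
by rewrite !(mul0r, mulr0, addr0, add0r, mulr1, mul1r, subr0, oppr0).
Qed.

Lemma S2_iff (h a : nat -> R) : S2 d h a <->
  forall k, a k.+2 = E2 h (a 0%N) (a 1%N) (a 2%N) k.
Proof.
rewrite S2E; split => H.
  move=> k; move: (H (- k%:Z)); rewrite (f3_neg _ (erefl _)) f2_negk lcoef_hS_negk negz_eq0.
  rewrite (@lcoef_aS_neg _ _ k.+2); last by lia.
  by move=> ->; rewrite /E2; case: (k == 0%N); rewrite ?mulr1 ?mulr0 ?addr0.
move=> n; case: (lerP n 0) => hn.
  have hk : n = - (absz n)%:Z by lia.
  rewrite hk (f3_neg _ (erefl _)) f2_negk lcoef_hS_negk negz_eq0.
  rewrite (@lcoef_aS_neg _ _ (absz n).+2); last by lia.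
  by rewrite H /E2; case: (_ == 0%N); rewrite ?mulr1 ?mulr0 ?addr0.
rewrite f3_eval_pos //.
have [->|[->|[->|hn2]]] : n = 1 \/ n = 2%:Z \/ n = 3%:Z \/ 3%:Z < n by lia.
- rewrite f2_eval lcoef_hS_1 /= /c2 /conv /= big_ord1 /lcoef /=.
  rewrite d0 !(mul0r, mulr0, addr0, add0r, mulr1, mul1r, subr0).
  by rewrite mulr2n mulr_natl; ring.
- rewrite f2_eval /= /lcoef /=.
  by rewrite !(mul0r, mulr0, addr0, add0r, mulr1, mul1r, subr0, oppr0, addn0).
- rewrite f2_eval /= /lcoef /=.
  by rewrite !(oppr0, mul0r, mulr0, addr0, add0r, mulr1, mul1r, subr0).
rewrite f2_eval !lcoef_gt //; try by rewrite ?ldeg_fdb //=; lia.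
rewrite (_ : (n == 0) = false); last by apply/eqP; lia.
rewrite !ifF; try by apply/eqP; lia.
by rewrite !(oppr0, mul0r, mulr0, addr0, add0r, mulr1, mul1r, subr0, subrr).
Qed.


Definition F (h : nat -> R) (a0 a1 : R) k :=
  a0 * hh h k.+1 + 3%:R * hh h 1 * hh h k - a1 * hh h k - d (c2 h k) - R2 h k - a0 * c2 h k.

Lemma E21 (h : nat -> R) a0 a1 a2 k : (0 < k)%N ->
  E2 h a0 a1 a2 k - E1 h a0 a1 k.+1 = hh h k.+2 - F h a0 a1 k.
Proof.
move=> hk; rewrite /E1 /E2 /F /= (_ : (k == 0%N) = false); last by case: k hk.
rewrite !(mulr0, subr0, addr0); ring.
Qed.

Lemma key (h a : nat -> R) k : S12 d h a -> (0 < k)%N ->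
  hh h k.+2 = F h (a 0%N) (a 1%N) k.
Proof.
move=> [/S1_iff H1 /S2_iff H2] hk.
have := E21 h (a 0%N) (a 1%N) (a 2%N) hk.
rewrite -H1 -H2 subrr => /esym /eqP; rewrite subr_eq0 => /eqP //.
Qed.

Definition agree (h h' : nat -> R) m := forall j, (j <= m)%N -> hh h j = hh h' j.

Lemma agree_le h h' m n : agree h h' m -> (n <= m)%N -> agree h h' n.
Proof. by move=> H hn j hj; apply: H; apply: leq_trans hn. Qed.

Lemma conv_loc h h' k : agree h h' k -> conv h k = conv h' k.
Proof.
move=> H; apply: eq_bigr => i _; have hi := ltn_ord i.
by rewrite !H // ?leq_subr // -ltnS.
Qed.

Lemma c2_loc h h' k : agree h h' k.+1 -> c2 h k = c2 h' k.
Proof.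
move=> H; rewrite /c2 !H // (conv_loc (agree_le H _)) //.
Qed.

Lemma R2_loc h h' k : agree h h' k.+1 -> R2 h k = R2 h' k.
Proof.
move=> H; apply: eq_bigr => i _; have hi := ltn_ord i.
rewrite H; last by apply: leq_trans (leqnSn _); rewrite -ltnS.
congr (_ * _); apply: c2_loc; apply: agree_le H _.
by rewrite ltnS leq_subr.
Qed.

Lemma F_loc h h' a0 a1 k : agree h h' k.+1 -> F h a0 a1 k = F h' a0 a1 k.
Proof.
move=> H; rewrite /F (c2_loc H) (R2_loc H) !H // ?(leq_trans (leqnSn _)) //.
Qed.

Lemma E1_loc h h' a0 a1 k : agree h h' k.+1 -> E1 h a0 a1 k = E1 h' a0 a1 k.
Proof.
move=> H; rewrite /E1 (c2_loc H) !H // ?(leq_trans (leqnSn _)) //.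
Qed.

Lemma uniq_agree (h a h' a' : nat -> R) : S12 d h a -> S12 d h' a' ->
  a 0%N = a' 0%N -> a 1%N = a' 1%N -> h 1%N = h' 1%N -> h 2%N = h' 2%N ->
  forall m, agree h h' m.
Proof.
move=> S S' e0 e1 eh1 eh2.
suff H : forall m, agree h h' m.+2.
  by move=> m; apply: agree_le (H m) _; apply: leq_trans (leqnSn _) (leqnSn _).
elim=> [|m IH].
  by move=> [|[|[|j]]] //=.
move=> j hj; case: (leqP j m.+2) => hjm; first exact: IH.
have -> : j = m.+3 by apply/eqP; rewrite eqn_leq hj hjm.
rewrite (key S) // (key S') // e0 e1.
exact: F_loc.
Qed.


Fixpoint gs (a0 a1 h1 h2 : R) (m : nat) : seq R :=
  if m is m'.+1 then rcons (gs a0 a1 h1 h2 m') (F (fun j => nth 0 (gs a0 a1 h1 h2 m') j) a0 a1 m'.+1)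
  else [:: 0; h1; h2].

Lemma size_gs a0 a1 h1 h2 m : size (gs a0 a1 h1 h2 m) = m.+3.
Proof. by elim: m => //= m IH; rewrite size_rcons IH. Qed.

Lemma nth_gs_mono a0 a1 h1 h2 m m' j : (m <= m')%N -> (j < m.+3)%N ->
  nth 0 (gs a0 a1 h1 h2 m') j = nth 0 (gs a0 a1 h1 h2 m) j.
Proof.
elim: m' => [|m' IH] hm hj; first by move: hm; rewrite leqn0 => /eqP ->.
case: (leqP m m') => hmm.
  rewrite /= nth_rcons size_gs ifT; first exact: IH.
  by apply: leq_trans hj _; rewrite !ltnS.
by have -> : m = m'.+1 by apply/eqP; rewrite eqn_leq hm hmm.
Qed.

Definition hfin a0 a1 h1 h2 (j : nat) : R := nth 0 (gs a0 a1 h1 h2 j) j.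

Lemma nth_gs_hfin a0 a1 h1 h2 m j : (j < m.+3)%N ->
  nth 0 (gs a0 a1 h1 h2 m) j = hfin a0 a1 h1 h2 j.
Proof.
move=> hj; rewrite /hfin; case: (leqP j m) => hjm.
  by rewrite (nth_gs_mono _ _ _ _ hjm) // ltnS leqW.
by rewrite (nth_gs_mono _ _ _ _ (ltnW hjm)).
Qed.

Lemma hfin_rec a0 a1 h1 h2 k : (0 < k)%N ->
  hh (hfin a0 a1 h1 h2) k.+2 = F (hfin a0 a1 h1 h2) a0 a1 k.
Proof.
case: k => // m _ /=.
rewrite -(nth_gs_hfin a0 a1 h1 h2 (m := m.+1)) // /= nth_rcons size_gs ltnn eqxx.
apply: F_loc => j hj; case: j hj => // j hj /=.
by apply: nth_gs_hfin.
Qed.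

Lemma hfin1 a0 a1 h1 h2 : hfin a0 a1 h1 h2 1 = h1.
Proof. by []. Qed.
Lemma hfin2 a0 a1 h1 h2 : hfin a0 a1 h1 h2 2 = h2.
Proof. by []. Qed.

Lemma conv0 h : conv h 0 = 0.
Proof. by rewrite /conv big_ord1 /= mul0r. Qed.
Lemma conv1 h : conv h 1 = 0.
Proof. by rewrite /conv !big_ord_recl big_ord0 /= mul0r mulr0 !addr0. Qed.
Lemma conv2 h : conv h 2 = h 1%N ^+ 2.
Proof. by rewrite /conv !big_ord_recl big_ord0 /= mul0r mulr0 !addr0 add0r expr2. Qed.

Lemma d2x x : d (2%:R * x) = 2%:R * d x.
Proof. by rewrite dM dn mul0r add0r. Qed.

Lemma existence (a0 a1 h1 h2 : R) : exists (h a : nat -> R),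
  S12 d h a /\ a 0%N = a0 /\ a 1%N = a1 /\ h 1%N = h1 /\ h 2%N = h2.
Proof.
set h := hfin a0 a1 h1 h2.
pose a j := if j is k.+1 then E1 h a0 a1 k else a0.
have a1E : a 1%N = a1.
  by rewrite /a /E1 /c2 /= conv0 d0 mulr0 !addr0 add0r subrr add0r.
exists h, a; split; last by rewrite a1E /h hfin1 hfin2.
split.
  by apply/S1_iff => k; rewrite a1E.
apply/S2_iff => k; rewrite a1E.
case: k => [|k].
  rewrite /E2 /a /E1 /= /c2 /R2 big_ord1 /= conv0 conv1 d0 !(mul0r, mulr0, addr0, add0r, subr0).
  rewrite d2x; ring.
by apply/eqP; rewrite -subr_eq0 -opprB oppr_eq0 [a k.+3]/a [a 0%N]/a E21 // hfin_rec // subrr.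
Qed.



Lemma a2_formula (h a : nat -> R) : S12 d h a ->
  a 2%N = 2%:R * h 2%N + d (h 1%N) + a 0%N * h 1%N.
Proof.
move=> [/S1_iff H1 _]; rewrite H1 /E1 /c2 /= conv1 !(addr0, subr0); ring.
Qed.

Lemma h3_formula (h a : nat -> R) : S12 d h a ->
  h 3%N = - d (d (h 1%N)) - 2%:R * d (h 2%N) + h 1%N ^+ 2 - a 1%N * h 1%N
          - a 0%N * (d (h 1%N) + h 2%N).
Proof.
move=> S; have := key S (k:=1) erefl; rewrite /= => ->.
rewrite /F /R2 /c2 /= !big_ord_recl big_ord0 /= conv0 conv1 /= !dD d0 d2x.
rewrite !(addr0, add0r, mul0r); ring.
Qed.

Lemma hc1 (h a : nat -> R) : dkp2_hc d h a 1 = d (2%:R * h 2%N + d (h 1%N)).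
Proof.
rewrite /dkp2_hc /cf /dkp2_h lcoef_dx lcoef_H2 f2_negk negz_eq0 /= subr0.
by rewrite /c2 /= conv1 addr0 addrC.
Qed.

Lemma hc2 (h a : nat -> R) : S12 d h a ->
  let a0 := a 0%N in let a1 := a 1%N in let h1 := h 1%N in let h2 := h 2%N in
  dkp2_hc d h a 2 = - d (2%:R * d (d h1) + 3%:R * d h2 - 3%:R * h1 ^+ 2
                           + 2%:R * a0 * (d h1 + h2) + 2%:R * a1 * h1).
Proof.
move=> S a0 a1 h1 h2.
rewrite /dkp2_hc /cf /dkp2_h lcoef_dx lcoef_H2 f2_negk negz_eq0 /= subr0.
rewrite /c2 /= conv2 (h3_formula S) -[in RHS]dN; congr (d _).
rewrite /a0 /a1 /h1 /h2; ring.
Qed.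

Lemma final_id (h a : nat -> R) : S12 d h a ->
  let a0 := a 0%N in let a1 := a 1%N in let a2 := a 2%N in
  let h1 := h 1%N in let h2 := h 2%N in
  lseq (lmul (lz R) (ladd (ladd (fdb d (hS h) 2) (lmul (lC a0) (fdb d (hS h) 1)))
                        (lC (a1 - 2%:R * h1))))
         (ladd (ladd (ladd (fdb d (hS h) 3) (lmul (lC a0) (fdb d (hS h) 2)))
                     (lmul (lC (a1 - 3%:R * h1)) (fdb d (hS h) 1)))
               (lC (a2 - 2%:R * a0 * h1 - 3%:R * h2 - 3%:R * d h1))).
Proof.
move=> [/S1E H1 /S2E H2] a0 a1 a2 h1 h2 n.
rewrite lcoef_lz_mul 2!lcoef_add 3!lcoef_add !lcoef_lC_mul !lcoef_C !lcoef_f1.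
transitivity (lcoef (aS a) (n - 2%:Z)).
  rewrite (_ : n - 2%:Z = n - 1 - 1); last by lia.
  rewrite H1 /a0 /a1 /h1; case: (n - 1 == 0); rewrite /= ?mulr1 ?mulr0; ring.
rewrite H2 /a0 /a1 /a2 /h1 /h2; case: (n == 0); rewrite /= ?mulr1 ?mulr0; ring.
Qed.


Lemma lcoef_mul_congr2 (s s' t t' : lser R) n : ldeg s = ldeg s' -> ldeg t = ldeg t' ->
  (forall m, lcoef s m = lcoef s' m) -> (forall m, lcoef t m = lcoef t' m) ->
  lcoef (lmul s t) n = lcoef (lmul s' t') n.
Proof.
move=> hs ht cs ct; rewrite !lcoef_mul hs ht; case: ifP => // _.
by apply: eq_bigr => i _; rewrite cs ct.
Qed.

Lemma fdb_congr (s s' : lser R) j : ldeg s = ldeg s' -> (forall m, lcoef s m = lcoef s' m) ->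
  ldeg (fdb d s j) = ldeg (fdb d s' j) /\ forall n, lcoef (fdb d s j) n = lcoef (fdb d s' j) n.
Proof.
move=> hs cs; elim: j => [//|j [IHd IHc]].
split; first by rewrite /= IHd hs.
move=> n; rewrite !fdbS !lcoef_add !lcoef_dx IHc.
by rewrite (lcoef_mul_congr2 _ hs IHd cs IHc).
Qed.

Lemma H2_congr (s s' : lser R) n : ldeg s = ldeg s' -> (forall m, lcoef s m = lcoef s' m) ->
  lcoef (H2 d s) n = lcoef (H2 d s') n.
Proof.
move=> hs cs; rewrite !lcoef_H2 /cf cs.
by have [_ ->] := fdb_congr 2 hs cs.
Qed.

Definition H2e (x : nat -> R) (n : int) : R :=
  if n <= 0 then c2 x (absz n) - (if n == 0 then 2%:R * hh x 1 else 0)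
  else if n == 1 then 0 else if n == 2%:Z then 1 else 0.

Lemma H2_eval (x : nat -> R) n : lcoef (H2 d (hS x)) n = H2e x n.
Proof.
rewrite lcoef_H2 f2_eval /H2e /cf lcoef_hS_negk.
case: (lerP n 0) => hn //.
by rewrite (_ : (n == 0) = false) ?subr0 //; apply/eqP; lia.
Qed.


Definition eps (a : nat -> R) := lmul (ldx d (aS a)) (linv (aS a)).

Lemma eps3 (a : nat -> R) : lcoef (eps a) (- 3%:Z) =
  d (a 2%N) - a 0%N * d (a 1%N) + (a 0%N ^+ 2 - a 1%N) * d (a 0%N).
Proof.
rewrite /eps /lcoef /= !big_ord_recl !big_ord0 /= ?d1 ?mul0r ?add0r.
rewrite ?big_ord_recl ?big_ord0 /= /bump /=; ring.
Qed.

Lemma eps2 (a : nat -> R) : lcoef (eps a) (- 2%:Z) = d (a 1%N) - a 0%N * d (a 0%N).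
Proof.
rewrite /eps /lcoef /= !big_ord_recl !big_ord0 /= ?d1 ?mul0r ?add0r.
rewrite ?big_ord_recl ?big_ord0 /= /bump /=; ring.
Qed.

Lemma eps1 (a : nat -> R) : lcoef (eps a) (- 1%:Z) = d (a 0%N).
Proof.
rewrite /eps /lcoef /= !big_ord_recl !big_ord0 /= ?d1 ?mul0r ?add0r.
rewrite ?big_ord_recl ?big_ord0 /= /bump /=; ring.
Qed.

Lemma eps0 (a : nat -> R) : lcoef (eps a) 0 = 0.
Proof.
rewrite /eps /lcoef /= !big_ord_recl !big_ord0 /= ?d1 ?mul0r ?add0r.
rewrite ?big_ord_recl ?big_ord0 /= /bump /=; ring.
Qed.

Lemma ldeg_eps (a : nat -> R) : ldeg (eps a) = 0.
Proof. by []. Qed.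


Definition gf (h a : nat -> R) j := lcoef (htilde d (hS h) (aS a)) (- j%:Z).

Lemma ht_coef (h a : nat -> R) n :
  lcoef (htilde d (hS h) (aS a)) n = lcoef (hS h) n + lcoef (eps a) n.
Proof. exact: lcoef_add. Qed.

Lemma gfE (h a : nat -> R) j : gf h a j = hh h j + lcoef (eps a) (- j%:Z).
Proof. by rewrite /gf ht_coef lcoef_hS_negk. Qed.

Lemma ht_hS (h a : nat -> R) n : lcoef (htilde d (hS h) (aS a)) n = lcoef (hS (gf h a)) n.
Proof.
case: (lerP n 0) => hn.
  have hk : n = - (absz n)%:Z by lia.
  rewrite hk lcoef_hS_negk; case: (absz n) => [|k] //.
  by rewrite ht_coef lcoef_hS_negk; change (- 0%:Z) with (0 : int); rewrite eps0 addr0.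
have [->|hn1] : n = 1 \/ 1 < n by lia.
  by rewrite ht_coef (@lcoef_gt (eps a)) ?addr0.
rewrite !lcoef_gt //.
Qed.

Lemma D_eval (h a : nat -> R) n :
  lcoef (lsub (H2 d (htilde d (hS h) (aS a))) (H2 d (hS h))) n = H2e (gf h a) n - H2e h n.
Proof.
rewrite lcoef_sub (@H2_congr _ (hS (gf h a))) ?H2_eval //.
exact: ht_hS.
Qed.

Lemma ac0 (h a : nat -> R) :
  dkp2_ac d h a 0 = d (2%:R * a 1%N - a 0%N ^+ 2 + d (a 0%N)).
Proof.
rewrite /dkp2_ac /cf /dkp2_a (@lcoef_mul1 _ _ 2 0 (- 0%:Z)) //.
rewrite !big_ord_recl !big_ord0 !D_eval lcoef_aS_1 !lcoef_aS_negk /H2e /=.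
rewrite /c2 /= !conv0 !conv1 !gfE /= eps1 eps2 d0.
rewrite !expr2 !(dD, dB, dN, dM, d2x, d0, d1, dn).
ring.
Qed.


Lemma ac1 (h a : nat -> R) :
  dkp2_ac d h a 1 = 2%:R * d (a 2%N) + d (d (a 1%N)) + 2%:R * d (a 0%N) * (h 1%N - a 1%N).
Proof.
rewrite /dkp2_ac /cf /dkp2_a (@lcoef_mul1 _ _ 2 1 (- 1%:Z)) //.
rewrite !big_ord_recl !big_ord0 !D_eval lcoef_aS_1 !lcoef_aS_negk /H2e /=.
rewrite /c2 /= !conv0 !conv1 !conv2 !gfE /= eps1 eps2 eps3 d0.
rewrite !expr2 !(dD, dB, dN, dM, d2x, d0, d1, dn).
ring.
Qed.

End Work.
End Aux.

Theorem mainTheorem7 (R : comNzRingType) (d : R -> R) (hd : is_derivation d) :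
  (* (a_0, a_1, h_1, h_2) are free parameters on S_{1,2}: existence ... *)
  (forall a0 a1 h1 h2 : R, exists (h a : nat -> R),
      S12 d h a /\ a 0%N = a0 /\ a 1%N = a1 /\ h 1%N = h1 /\ h 2%N = h2) /\
  (* ... and uniqueness *)
  (forall h a h' a' : nat -> R, S12 d h a -> S12 d h' a' ->
      a 0%N = a' 0%N -> a 1%N = a' 1%N -> h 1%N = h' 1%N -> h 2%N = h' 2%N ->
      (forall j, (1 <= j)%N -> h j = h' j) /\ (forall j, a j = a' j)) /\
  (forall h a : nat -> R, S12 d h a ->
    let a0 := a 0%N in let a1 := a 1%N in let a2 := a 2%N in
    let h1 := h 1%N in let h2 := h 2%N in
    a2 = 2%:R * h2 + d h1 + a0 * h1 /\
    h 3%N = - d (d h1) - 2%:R * d h2 + h1 ^+ 2 - a1 * h1 - a0 * (d h1 + h2) /\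
    dkp2_ac d h a 0 = d (2%:R * a1 - a0 ^+ 2 + d a0) /\
    dkp2_ac d h a 1 = 2%:R * d a2 + d (d a1) + 2%:R * d a0 * (h1 - a1) /\
    dkp2_hc d h a 1 = d (2%:R * h2 + d h1) /\
    dkp2_hc d h a 2 = - d (2%:R * d (d h1) + 3%:R * d h2 - 3%:R * h1 ^+ 2
                           + 2%:R * a0 * (d h1 + h2) + 2%:R * a1 * h1) /\
    lseq (lmul (lz R) (ladd (ladd (fdb d (hS h) 2) (lmul (lC a0) (fdb d (hS h) 1)))
                        (lC (a1 - 2%:R * h1))))
         (ladd (ladd (ladd (fdb d (hS h) 3) (lmul (lC a0) (fdb d (hS h) 2)))
                     (lmul (lC (a1 - 3%:R * h1)) (fdb d (hS h) 1)))
               (lC (a2 - 2%:R * a0 * h1 - 3%:R * h2 - 3%:R * d h1)))).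
Proof.
split; first by move=> a0 a1 h1 h2; exact: (Aux.existence hd).
split.
  move=> h a h' a' S S' e0 e1 eh1 eh2.
  have ag := Aux.uniq_agree hd S S' e0 e1 eh1 eh2.
  split.
    by move=> [|j] // _; have := ag j.+1 j.+1 (leqnn _).
  move=> [|[|j]] //.
  have [/(Aux.S1_iff hd) H1 _] := S; have [/(Aux.S1_iff hd) H1' _] := S'.
  rewrite H1 H1' e0 e1; apply: Aux.E1_loc; exact: ag.
move=> h a S a0 a1 a2 h1 h2.
split; first exact: (Aux.a2_formula hd S).
split; first exact: (Aux.h3_formula hd S).
split; first exact: (Aux.ac0 hd).
split; first exact: (Aux.ac1 hd).
split; first exact: (Aux.hc1 hd).
split; first exact: (Aux.hc2 hd S).
exact: (Aux.final_id hd S).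
Qed.
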